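(* Let $p$ be a prime and $\alpha=(\ell_1,\dots,\ell_m)$ a type, and let $A(\alpha)=\prod_{i=1}^m\mathbb{Z}/p^{\ell_i}\mathbb{Z}$. (a) If $\{\mathfrak z_1,\dots,\mathfrak z_r\}$ is a minimal generating set of $A(\alpha)$ (i.e. a generating set no proper subset of which generates) with $|\mathfrak z_i|=p^{d_i}$ and $\ell_1=d_1\ge d_2\ge\cdots\ge d_r\ge 1$, then $r=m$ and $d_i\ge \ell_i$ for all $i$. (b) Conversely, given integers $d_1,\dots,d_m$ with $\ell_1=d_1\ge\cdots\ge d_m\ge 1$ and $d_i\ge\ell_i$ for all $i$, there exists a minimal generating set $\{\mathfrak z_1,\dots,\mathfrak z_m\}$ of $A(\alpha)$ with $|\mathfrak z_i|=p^{d_i}$ for all $i$.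
   Context: A type is a tuple of integers $(k_1,\dots,k_n)$ with $k_1\ge\cdots\ge k_n\ge1$. For $\mathfrak x$ in a group, $|\mathfrak x|$ denotes its order. *)

(* Defs.v *)
From HB Require Import structures.
From mathcomp Require Import all_boot all_fingroup.
Set Implicit Arguments. Unset Strict Implicit. Unset Printing Implicit Defensive.
Local Open Scope group_scope.

Definition is_type (a : seq nat) : bool :=
  sorted geq a && all (fun k => 0 < k) a.

(* G is (isomorphic to) A(a) = prod_{i} Z/p^{a_i}Z : G is the internal direct
   product of cyclic subgroups <[x_i]> with #[x_i] = p ^ a_i. *)
Definition is_A (gT : finGroupType) (p : nat) (a : seq nat) (G : {set gT}) : Prop :=
  exists x : 'I_(size a) -> gT,
    \big[dprod/1]_(i < size a) <[x i]> = G /\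
    forall i : 'I_(size a), #[x i] = (p ^ nth 0 a i)%N.

Definition min_gen_set (gT : finGroupType) (S G : {set gT}) : Prop :=
  <<S>> = G /\ forall T : {set gT}, T \proper S -> <<T>> <> G.

(* Main.v *)
Require Import Defs.

From mathcomp Require Import all_boot all_fingroup.
From mathcomp Require Import cyclic pgroup abelian maximal.
Set Implicit Arguments. Unset Strict Implicit. Unset Printing Implicit Defensive.
Local Open Scope group_scope.

Section H.
Variable gT : finGroupType.
Implicit Types (b : seq gT) (K : {group gT}).

Lemma bigd_pab (p : nat) b K : all (p_elt p) b ->
  \big[dprod/1]_(y <- b) <[y]> = K -> p.-group K && abelian K.
Proof.
elim: b K => [|c b IH] K /=; first by rewrite big_nil => _ <-; rewrite pgroup1 abelian1.
case/andP=> pc pb; rewrite big_cons; case/dprodP=> [[_ H _ defH]] <-; rewrite defH => cxH _.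
have /andP[pH aH] := IH H pb defH.
apply/andP; split; first by rewrite pgroupM pH andbT.
by rewrite abelianM cycle_abelian aH cxH.
Qed.

Lemma bigd_rank (p : nat) b K : all (p_elt p) b ->
  \big[dprod/1]_(y <- b) <[y]> = K -> 'r_p(K) = count (predC1 1) b.
Proof.
elim: b K => [|c b IH] K /=; first by rewrite big_nil => _ <-; rewrite p_rank1.
case/andP=> pc pb; rewrite big_cons => dK.
have dK' := dK; case/dprodP: dK' => [[_ H _ defH]] _ _ _.
rewrite defH in dK.
rewrite -(p_rank_dprod p dK) (IH H pb defH) -(rank_pgroup pc) rank_cycle.
by [].
Qed.

Lemma bigd_Mho (p j : nat) b K : all (p_elt p) b ->
  \big[dprod/1]_(y <- b) <[y]> = K ->
  \big[dprod/1]_(y <- b) <[y ^+ (p ^ j)]> = 'Mho^j(K).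
Proof.
elim: b K => [|c b IH] K /=; first by rewrite !big_nil => _ <-; rewrite Mho1.
case/andP=> pc pb; rewrite !big_cons => dK.
have dK' := dK; case/dprodP: dK' => [[_ H _ defH]] _ _ _.
rewrite defH in dK.
rewrite (IH H pb defH) -(Mho_p_cycle j pc).
exact: Mho_dprod.
Qed.

Lemma prodgX (I : Type) (r : seq I) (F : I -> gT) k K : abelian K ->
  (forall i, F i \in K) -> (\prod_(i <- r) F i) ^+ k = \prod_(i <- r) F i ^+ k.
Proof.
move=> cKK FK; elim: r => [|c r IH]; first by rewrite !big_nil expg1n.
rewrite !big_cons expgMn ?IH //.
apply: (centsP cKK); first exact: FK.
by apply: group_prod => i _; apply: FK.
Qed.

Lemma orderM_TI (x y : gT) : commute x y -> <[x]> :&: <[y]> = 1 ->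
  #[x * y] = lcmn #[x] #[y].
Proof.
move=> cxy tixy.
have key n : (#[x * y] %| n) = (lcmn #[x] #[y] %| n).
  rewrite dvdn_lcm !order_dvdn expgMn //.
  apply/idP/idP; last by case/andP=> /eqP-> /eqP->; rewrite mulg1.
  move/eqP=> e.
  have xn1 : x ^+ n = 1.
    apply/set1gP; rewrite -tixy inE mem_cycle.
    have -> : x ^+ n = (y ^+ n)^-1 by rewrite -[x ^+ n]mulg1 -(mulgV (y ^+ n)) mulgA e mul1g.
    by rewrite groupV mem_cycle.
  by move: e; rewrite xn1 mul1g => ->; rewrite !eqxx.
by apply/eqP; rewrite eqn_dvd key dvdnn -key dvdnn.
Qed.

Lemma irred_le_rank (p : nat) (K : {group gT}) (S : {set gT}) : prime p ->
  p.-group K -> abelian K -> min_gen_set S K -> #|S| <= 'r(K).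
Proof.
move=> pr pK cKK [defK minS].
set P := 'Phi(K).
have sSK : S \subset K by rewrite -defK subset_gen.
have irr s : s \in S -> s \notin P <*> <<S :\ s>>.
  move=> Ss; apply/negP => sin; apply: (minS (S :\ s)); first exact: properD1.
  rewrite -[<<S :\ s>>]genGid; apply: Phi_nongen; apply/eqP.
  rewrite eqEsubset join_subG Phi_sub /=.
  apply/andP; split; first by rewrite -defK genS ?subsetDl.
  rewrite -{1}defK gen_subG.
  apply/subsetP=> t St; have [->//|nts] := eqVneq t s.
  by rewrite (subsetP (joing_subr _ _)) // mem_gen // !inE nts.
have claim n : forall T : {set gT}, #|T| = n -> T \subset S -> p ^ n * #|P| <= #|P <*> <<T>>|.
  elim: n => [|n IH] T cT sTS.
    by rewrite (cards0_eq cT) gen0 joingG1 mul1n.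
  have [s Ts] : exists s, s \in T by apply/set0Pn; rewrite -cards_eq0 cT.
  have cT' : #|T :\ s| = n by move: cT; rewrite (cardsD1 s) Ts add1n => -[].
  have sT'S : T :\ s \subset S by rewrite (subset_trans (subsetDl _ _)).
  have := IH _ cT' sT'S.
  set K1 := P <*> <<T :\ s>>; set K2 := P <*> <<T>> => le1.
  have s12 : K1 \subset K2.
    by rewrite join_subG joing_subl /= (subset_trans (genS (subsetDl T [set s]))) ?joing_subr.
  have n21 : ~~ (K2 \subset K1).
    apply/negP=> s21; have : s \in K1.
      by rewrite (subsetP s21) // (subsetP (joing_subr _ _)) // mem_gen.
    apply/negP; apply: contra (irr s (subsetP sTS s Ts)).
    apply: subsetP; rewrite join_subG joing_subl /=.
    by rewrite (subset_trans _ (joing_subr _ _)) // genS // setSD.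
  have pK2 : p.-group K2.
    apply: pgroupS pK; rewrite join_subG Phi_sub /= -defK genS //.
  have pidx : p.-nat #|K2 : K1| by apply: pnat_dvd (dvdn_indexg _ _) pK2.
  have [k dk] := p_natP pidx.
  have k0 : 0 < k.
    rewrite lt0n; apply/negP=> /eqP k0; move: (indexg_gt1 K2 K1); rewrite dk k0 n21.
    by [].
  rewrite -(Lagrange s12) expnS -mulnA mulnC leq_mul // dk.
  by rewrite -{1}(expn1 p) leq_exp2l ?prime_gt1.
have := claim _ S (erefl _) (subxx _).
have -> : P <*> <<S>> = K by rewrite defK; apply/joing_idPr; apply: Phi_sub.
rewrite -(Lagrange (Phi_sub K)) -card_quotient ?normal_norm ?Phi_normal //.
have pQ : p.-group (K / P) by apply: quotient_pgroup.
rewrite (card_pgroup pQ) -(rank_abelem (Phi_quotient_abelem pK)) mulnC.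
rewrite leq_pmul2l ?cardG_gt0 // => le.
have le2 : p ^ #|S| <= p ^ 'r(K).
  apply: leq_trans le _; rewrite leq_exp2l ?prime_gt1 //.
  exact: quotient_rank_abelian.
by rewrite leq_exp2l ?prime_gt1 in le2.
Qed.

Lemma sorted_geq_nth (s : seq nat) i k : sorted geq s -> i <= k -> k < size s ->
  (nth 0 s k <= nth 0 s i)%N.
Proof.
move=> ss ik ks.
have gtr : transitive geq by move=> ? ? ? h1 h2; exact: leq_trans h2 h1.
have grf : reflexive geq by move=> ?; exact: leqnn.
apply: (sorted_leq_nth gtr grf 0 ss) => //; exact: leq_ltn_trans ik ks.
Qed.

Lemma count_iota_le i m : i < m -> count (fun n => n <= i) (iota 0 m) = i.+1.
Proof.
move=> lim; rewrite -(subnKC lim) iotaD count_cat add0n.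
rewrite (@eq_in_count _ _ predT) ?count_predT ?size_iota; last first.
  by move=> n; rewrite mem_iota.
rewrite (@eq_in_count _ _ pred0) ?count_pred0 ?addn0 // => n.
by rewrite mem_iota => /andP[h _]; rewrite /= leqNgt h.
Qed.

End H.
Theorem theorem3p1 (p : nat) (a : seq nat) (gT : finGroupType) (G : {group gT}) :
  prime p -> is_type a -> is_A p a G ->
  (* (a) *)
  (forall (z : seq gT) (d : seq nat),
      uniq z -> min_gen_set [set x in z] G ->
      size d = size z ->
      (forall i, (i < size z)%N -> #[nth 1 z i] = (p ^ nth 0 d i)%N) ->
      nth 0 a 0 = nth 0 d 0 -> sorted geq d -> all (fun k => 0 < k)%N d ->
      size z = size a /\ (forall i, (i < size a)%N -> nth 0 a i <= nth 0 d i)%N)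
  /\
  (* (b) *)
  (forall d : seq nat,
      size d = size a ->
      nth 0 a 0 = nth 0 d 0 -> sorted geq d -> all (fun k => 0 < k)%N d ->
      (forall i, (i < size a)%N -> nth 0 a i <= nth 0 d i)%N ->
      exists z : seq gT,
        [/\ uniq z, size z = size a, min_gen_set [set x in z] G &
            forall i, (i < size a)%N -> #[nth 1 z i] = (p ^ nth 0 d i)%N]).
Proof.
move=> pr /andP[sa pa] [x [dG ox]].
set m := size a in x dG ox *.
set b := [seq x i | i <- enum 'I_m].
have dGb : \big[dprod/1]_(y <- b) <[y]> = G by rewrite big_map big_enum.
have pb : all (p_elt p) b.
  by apply/allP => y /mapP[i _ ->]; rewrite /p_elt ox pnatX pnat_id.
have /andP[pG cGG] := bigd_pab pb dGb.
have apos i : (i < m)%N -> (0 < nth 0 a i)%N by move=> lim; apply: (all_nthP 0 pa).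
have nt1 (i : 'I_m) : x i != 1.
  apply/eqP=> x1; have := ox i; rewrite x1 order1 => /esym/eqP.
  rewrite -(expn0 p) eqn_exp2l ?prime_gt1 // => /eqP h.
  by have := apos i (ltn_ord i); rewrite h.
have rG : 'r(G) = m.
  rewrite (rank_pgroup pG) (bigd_rank pb dGb).
  have -> : m = size b by rewrite size_map size_enum_ord.
  by apply/eqP; rewrite -all_count; apply/allP => y /mapP[i _ ->]; exact: nt1.
have lowS (S : {set gT}) : <<S>> = G -> (m <= #|S|)%N.
  by move=> dS; rewrite -rG -grank_abelian // -dS grank_min.
split.
  move=> z d uz [defS minS] szd oz ad0 sd pd.
  have cS : #|[set x in z]| = size z by rewrite cardsE; apply/card_uniqP.
  have szm : size z = m.
    apply/eqP; rewrite eqn_leq -cS lowS // -rG andbT.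
    by apply: (irred_le_rank pr pG cGG).
  split => // i lti; rewrite leqNgt; apply/negP => lt.
  set j := nth 0 d i.
  have sdi k : (k < m)%N -> (i <= k)%N -> (nth 0 d k <= j)%N.
    by move=> km ik; apply: sorted_geq_nth sd ik _; rewrite szd szm.
  have sai k : (k <= i)%N -> (nth 0 a i <= nth 0 a k)%N.
    by move=> ki; apply: sorted_geq_nth sa ki lti.
  set M := 'Mho^j(G).
  have dM : \big[dprod/1]_(y <- [seq y ^+ (p ^ j) | y <- b]) <[y]> = M.
    by rewrite big_map; exact: bigd_Mho.
  have pbM : all (p_elt p) [seq y ^+ (p ^ j) | y <- b].
    by apply/allP => _ /mapP[y yb ->]; apply: p_eltX; exact: (allP pb).
  have pM : p.-group M := pgroupS (Mho_sub _ _) pG.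
  have lo : (i.+1 <= 'r(M))%N.
    rewrite (rank_pgroup pM) (bigd_rank pbM dM) -map_comp count_map.
    rewrite -(count_iota_le lti) -val_enum_ord count_map.
    apply: sub_count => k /= le_ki.
    rewrite -order_eq1 (orderXexp _ (ox k)) -(expn0 p) eqn_exp2l ?prime_gt1 //.
    by rewrite subn_eq0 -ltnNge (leq_trans lt (sai k le_ki)).
  have up : ('r(M) <= i)%N.
    set T := [set nth 1 z k ^+ (p ^ j) | k : 'I_i].
    have zG k : (k < size z)%N -> nth 1 z k \in G.
      by move=> kz; rewrite -defS mem_gen // inE mem_nth.
    have sTG : T \subset G.
      apply/subsetP => _ /imsetP[k _ ->]; rewrite groupX // zG //.
      by rewrite szm (ltn_trans (ltn_ord k) lti).
    have sMT : M \subset <<T>>.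
      rewrite /M (MhoEabelian j pG cGG); apply/subsetP => _ /imsetP[y Gy ->].
      move: Gy; rewrite -defS => /gen_prodgP[n [c Sc ->]].
      have cG q : c q \in G by rewrite -defS mem_gen.
      rewrite (prodgX _ _ cGG cG).
      apply: group_prod => q _.
      have czq : c q \in z by move: (Sc q); rewrite inE.
      rewrite -(nth_index 1 czq).
      have iz : (index (c q) z < size z)%N by rewrite index_mem.
      case: (ltnP (index (c q) z) i) => hq.
        by rewrite mem_gen //; apply/imsetP; exists (Ordinal hq).
      have : #[nth 1 z (index (c q) z)] %| p ^ j.
        by rewrite oz // dvdn_exp2l // sdi // -szm.
      by rewrite order_dvdn => /eqP->; rewrite group1.
    have cT : abelian <<T>> by apply: abelianS cGG; rewrite gen_subG.
    apply: leq_trans (rankS sMT) _; rewrite -grank_abelian //.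
    apply: leq_trans (grank_min T) _; apply: leq_trans (leq_imset_card _ _) _.
    by rewrite card_ord.
  by have := leq_trans lo up; rewrite ltnn.
move=> d szd ad0 sd pd led.
have xG (i : 'I_m) : x i \in G.
  by rewrite -(bigdprodWY dG) mem_gen //; apply/bigcupP; exists i => //; exact: cycle_id.
have [m0|m_gt0] := posnP m.
  have b0 : b = [::] by apply: size0nil; rewrite size_map size_enum_ord.
  move: dGb; rewrite b0 big_nil => G1.
  have e0 : [set y in [::]] = set0 :> {set gT} by apply/setP => y; rewrite !inE.
  exists [::]; split => //; last by move=> i; rewrite -/m m0.
  split; first by rewrite e0 gen0.
  by move=> T /proper_card; rewrite e0 cards0.
set i0 : 'I_m := Ordinal m_gt0.
pose zz := fun i : 'I_m =>
  if val i == 0 then x i else x i * x i0 ^+ (p ^ (nth 0 a 0 - nth 0 d i)).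
set zs := [seq zz i | i <- enum 'I_m].
have szs : size zs = m by rewrite size_map size_enum_ord.
have nthz k (hk : (k < m)%N) : nth 1 zs k = zz (Ordinal hk).
  rewrite (nth_map i0) ?size_enum_ord //; congr zz; apply: val_inj.
  by rewrite /= nth_enum_ord.
have TI (i : 'I_m) : val i != 0 -> <[x i]> :&: <[x i0]> = 1.
  move=> ni0; have ne : i != i0 by apply: contraNneq ni0 => ->.
  move: dG; rewrite (bigD1 i0) //= => /dprodP[[_ H _ defH] _ _ tiH].
  have sH : <[x i]> \subset H.
    rewrite -(bigdprodWY defH) (subset_trans _ (subset_gen _)) //.
    exact: (bigcup_sup i).
  rewrite defH in tiH; apply/trivgP; rewrite -tiH /= setIC setIS //.
have ordz (i : 'I_m) : #[zz i] = (p ^ nth 0 d i)%N.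
  rewrite /zz; case: eqP => h.
    by rewrite ox h ad0.
  have hi : val i != 0 by apply/eqP.
  set e := (p ^ (nth 0 a 0 - nth 0 d i))%N.
  have cx : commute (x i) (x i0 ^+ e) by apply: (centsP cGG); rewrite ?groupX ?xG.
  have ti : <[x i]> :&: <[x i0 ^+ e]> = 1.
    by apply/trivgP; rewrite -(TI i hi) /= setIS // cycleX.
  have dle : (nth 0 d i <= nth 0 a 0)%N.
    by rewrite ad0; apply: sorted_geq_nth sd _ _; rewrite // szd.
  rewrite (orderM_TI cx ti) (orderXexp _ (ox i0)) /= subKn //.
  by apply/lcmn_idPr; rewrite ox dvdn_exp2l // led.
have zS k : zz k \in <<[set y in zs]>> by rewrite mem_gen // inE map_f // mem_enum.
have defS : <<[set y in zs]>> = G.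
  apply/eqP; rewrite eqEsubset gen_subG; apply/andP; split.
    apply/subsetP => y; rewrite inE => /mapP[i _ ->]; rewrite /zz.
    by case: ifP => _; rewrite ?groupM ?groupX ?xG.
  rewrite -{1}(bigdprodWY dG) gen_subG; apply/bigcupsP => i _; rewrite cycle_subG.
  have x0S : x i0 \in <<[set y in zs]>> by have := zS i0; rewrite /zz /=.
  have [h|h] := eqVneq (val i) 0.
    by have -> : i = i0 by apply: val_inj.
  have := zS i; rewrite /zz (negbTE h) => h2.
  set e := (p ^ (nth 0 a 0 - nth 0 d i))%N in h2.
  have -> : x i = x i * x i0 ^+ e * (x i0 ^+ e)^-1 by rewrite mulgK.
  by rewrite groupM ?groupV ?groupX.
have cS : #|[set y in zs]| = #|zs| by rewrite cardsE.
have lm : (m <= #|zs|)%N by rewrite -cS lowS.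
have uzs : uniq zs.
  apply/card_uniqP; apply/eqP; rewrite eqn_leq card_size szs lm.
  by [].
exists zs; split => //.
  split => // T pT dT.
  have := lowS T dT; have := proper_card pT; rewrite cS => h1 h2.
  have := leq_trans (leq_trans h2 (ltnW h1)) (card_size zs).
  rewrite szs => _.
  by have := leq_ltn_trans h2 (leq_trans h1 (card_size zs)); rewrite szs ltnn.
by move=> k hk; rewrite nthz ordz.
Qed.
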